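(* Let $\mu$ be a Borel probability measure on $[0,1]$. (1) There is a constant $c$ independent of $N$ such that for every $N\in\mathbb{N}$ there exist points $x_1,\dots,x_N\in[0,1]$ with $D^*_N\big(\mu;\frac1N\sum_{i=1}^N\delta_{x_i}\big)\leq \frac{c}{N}$. (2) There exist a sequence $(x_k)_{k\in\mathbb{N}}\subseteq[0,1]$ and a constant $c$ independent of $N$ such that for all integers $N\geq2$, $D^*_N\big(\mu;\frac1N\sum_{i=1}^N\delta_{x_i}\big)\leq c\frac{\log N}{N}$. (3) Suppose $\mu$ has no point masses (i.e. $\mu(\{x\})=0$ for all $x\in[0,1]$). Then for every $N$ and every finite set $x_1,\dots,x_N\in[0,1]$, $D^*_N\big(\mu;\frac1N\sum_{i=1}^N\delta_{x_i}\big)\geq\frac{1}{2N}$. Moreover, there is a constant $c>0$ such that for every sequence $(x_k)_{k\in\mathbb{N}}\subseteq[0,1]$, the inequality $D^*_N\big(\mu;\frac1N\sum_{i=1}^N\delta_{x_i}\big)\geq c\frac{\log N}{N}$ holds for infinitely many $N\in\mathbb{N}$.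
   Context: $\delta_y$ denotes the Dirac measure at $y$. For probability measures $\mu,\nu$ on $[0,1]$, the star-discrepancy is $D^*_N(\mu;\nu)=\sup_{b\in[0,1]}|\mu([0,b))-\nu([0,b))|$ (supremum over half-open intervals anchored at $0$). *)

(* Defs.v *)
From Stdlib Require Import Reals Lra Classical ClassicalEpsilon.
Open Scope R_scope.

Inductive borel : (R -> Prop) -> Prop :=
| borel_halfline (b : R) : borel (fun x => x < b)
| borel_compl (A : R -> Prop) : borel A -> borel (fun x => ~ A x)
| borel_union (A : nat -> R -> Prop) :
    (forall n, borel (A n)) -> borel (fun x => exists n, A n x).

(* A Borel probability measure on [0,1], represented as a countably additive
   probability measure on the Borel sets of R carried by [0,1]. *)
Record prob_measure : Type := {
  pm : (R -> Prop) -> R;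
  pm_ext : forall A B : R -> Prop, (forall x, A x <-> B x) -> pm A = pm B;
  pm_nonneg : forall A, borel A -> 0 <= pm A;
  pm_total : pm (fun x => 0 <= x <= 1) = 1;
  pm_outside : pm (fun x => ~ (0 <= x <= 1)) = 0;
  pm_sigma_additive : forall A : nat -> R -> Prop,
    (forall n, borel (A n)) ->
    (forall i j, i <> j -> forall x, A i x -> A j x -> False) ->
    infinite_sum (fun n => pm (A n)) (pm (fun x => exists n, A n x))
}.

(* Supremum of a set of reals (0 if it has no least upper bound). *)
Definition sup_R (E : R -> Prop) : R :=
  match excluded_middle_informative (exists m, is_lub E m) with
  | left H => proj1_sig (constructive_indefinite_description _ H)
  | right _ => 0
  end.

Fixpoint count_below (x : nat -> R) (N : nat) (b : R) : R :=
  match N with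
  | O => 0
  | S n => count_below x n b + (if Rlt_dec (x (S n)) b then 1 else 0)
  end.

Definition empirical (x : nat -> R) (N : nat) (b : R) : R :=
  count_below x N b / INR N.

Definition star_disc (mu : prob_measure) (x : nat -> R) (N : nat) : R :=
  sup_R (fun r => exists b, 0 <= b <= 1 /\
          r = Rabs (pm mu (fun y => 0 <= y < b) - empirical x N b)).

Definition no_atoms (mu : prob_measure) : Prop :=
  forall a, 0 <= a <= 1 -> pm mu (fun y => y = a) = 0.

(* Main.v *)
Require Import Defs.
From Stdlib Require Import ZArith Reals Lra Lia Psatz Classical ClassicalEpsilon FunctionalExtensionality PropExtensionality.
Open Scope R_scope.

Fixpoint sumR (f : nat -> R) (n : nat) : R :=
  match n with O => 0 | S k => sumR f k + f k end.

Lemma sumR_ext f g n : (forall i, (i < n)%nat -> f i = g i) -> sumR f n = sumR g n.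
Proof. induction n; simpl; intros H; auto. rewrite IHn by (intros; apply H; lia). rewrite H by lia; auto. Qed.

Lemma sumR_plus f g n : sumR (fun i => f i + g i) n = sumR f n + sumR g n.
Proof. induction n; simpl; lra. Qed.

Lemma sumR_minus f g n : sumR (fun i => f i - g i) n = sumR f n - sumR g n.
Proof. induction n; simpl; lra. Qed.

Lemma sumR_scal c f n : sumR (fun i => c * f i) n = c * sumR f n.
Proof. induction n; simpl; [ring | rewrite IHn; ring]. Qed.

Lemma sumR_scalr c f n : sumR (fun i => f i * c) n = sumR f n * c.
Proof. induction n; simpl; [ring | rewrite IHn; ring]. Qed.

Lemma sumR_const c n : sumR (fun _ => c) n = INR n * c.
Proof. induction n; simpl sumR. simpl; ring. rewrite IHn, S_INR; ring. Qed.

Lemma sumR_zero n : sumR (fun _ => 0) n = 0.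
Proof. rewrite sumR_const; ring. Qed.

Lemma sumR_le f g n : (forall i, (i < n)%nat -> f i <= g i) -> sumR f n <= sumR g n.
Proof. induction n; simpl; intros H; [lra|]. assert (f n <= g n) by (apply H; lia).
  assert (sumR f n <= sumR g n) by (apply IHn; intros; apply H; lia). lra. Qed.

Lemma sumR_nonneg f n : (forall i, (i < n)%nat -> 0 <= f i) -> 0 <= sumR f n.
Proof. intros H. rewrite <- (sumR_zero n). apply sumR_le. auto. Qed.

Lemma sumR_abs f n : Rabs (sumR f n) <= sumR (fun i => Rabs (f i)) n.
Proof. induction n; simpl. rewrite Rabs_R0; lra.
  eapply Rle_trans; [apply Rabs_triang|]. lra. Qed.

Lemma sumR_add f a b : sumR f (a + b) = sumR f a + sumR (fun i => f (a + i)%nat) b.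
Proof. induction b; simpl. rewrite Nat.add_0_r; ring. rewrite Nat.add_succ_r; simpl. rewrite IHb; ring. Qed.

Lemma sumR_block f a b : sumR f (a * b) = sumR (fun x => sumR (fun y => f (x * b + y)%nat) b) a.
Proof. induction a; simpl sumR at 2; auto. rewrite Nat.mul_succ_l, sumR_add, IHa. reflexivity. Qed.

Lemma sumR_swap (F : nat -> nat -> R) a b :
  sumR (fun i => sumR (fun j => F i j) b) a = sumR (fun j => sumR (fun i => F i j) a) b.
Proof. induction a; simpl. rewrite sumR_zero; auto.
  rewrite IHa, <- sumR_plus. auto. Qed.

Lemma sumR_prod (f g : nat -> R) a b :
  sumR (fun i => sumR (fun j => f i * g j) b) a = sumR f a * sumR g b.
Proof. rewrite <- sumR_scalr. apply sumR_ext; intros. apply sumR_scal. Qed.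

Lemma sumR_ge_term f n k : (k < n)%nat -> (forall i, (i < n)%nat -> 0 <= f i) -> f k <= sumR f n.
Proof. induction n; intros Hk H; [lia|]. simpl.
  destruct (Nat.eq_dec k n). subst. assert (0 <= sumR f n) by (apply sumR_nonneg; intros; apply H; lia). lra.
  assert (f k <= sumR f n) by (apply IHn; [lia| intros; apply H; lia]). assert (0 <= f n) by (apply H; lia). lra. Qed.

Lemma Rabs_le2 x a : Rabs x <= a -> - a <= x <= a.
Proof. unfold Rabs. destruct (Rcase_abs x); intros; lra. Qed.


Lemma set_ext_eq (A B : R -> Prop) : (forall x, A x <-> B x) -> A = B.
Proof. intros H. apply functional_extensionality; intros x. apply propositional_extensionality; auto. Qed.

Lemma borel_ext A B : (forall x, A x <-> B x) -> borel A -> borel B.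
Proof. intros H. rewrite (set_ext_eq A B H); auto. Qed.

Lemma borel_union2 A B : borel A -> borel B -> borel (fun x => A x \/ B x).
Proof. intros HA HB.
  apply (borel_ext (fun x => exists n, (fun n => match n with O => A | _ => B end) n x)).
  - intros x; split. intros [[|n] H]; auto. intros [H|H]; [exists O|exists 1%nat]; auto.
  - apply borel_union. intros [|n]; auto. Qed.

Lemma borel_inter A B : borel A -> borel B -> borel (fun x => A x /\ B x).
Proof. intros HA HB.
  apply (borel_ext (fun x => ~ (~ A x \/ ~ B x))).
  - intros x; tauto.
  - apply borel_compl, borel_union2; apply borel_compl; auto. Qed.

Lemma borel_lt b : borel (fun x => x < b).
Proof. apply borel_halfline. Qed.

Lemma borel_ge b : borel (fun x => b <= x).
Proof. apply (borel_ext (fun x => ~ x < b)). intros; lra. apply borel_compl, borel_lt. Qed.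

Lemma small_inv e : 0 < e -> exists k : nat, / (INR k + 1) < e.
Proof. intros He. destruct (archimed (/ e)) as [H1 _].
  assert (0 < IZR (up (/e))) by (assert (0 < /e) by (apply Rinv_0_lt_compat; lra); lra).
  assert (0 <= up (/e))%Z by (apply le_IZR; lra).
  exists (Z.to_nat (up (/ e))). rewrite INR_IZR_INZ, Z2Nat.id by auto.
  assert (/e < IZR (up (/e)) + 1) by lra.
  apply Rinv_lt_contravar in H2; [|apply Rmult_lt_0_compat; try apply Rinv_0_lt_compat; lra].
  rewrite Rinv_inv in H2. lra. Qed.

Lemma inv_pos k : 0 < / (INR k + 1).
Proof. apply Rinv_0_lt_compat. pose proof (pos_INR k); lra. Qed.

Lemma borel_gt b : borel (fun x => b < x).
Proof. apply (borel_ext (fun x => exists n, b + / (INR n + 1) <= x)).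
  - intros x; split. intros [n H]. pose proof (inv_pos n). lra.
    intros H. destruct (small_inv (x - b)) as [k Hk]; [lra|]. exists k; lra.
  - apply borel_union; intros; apply borel_ge. Qed.

Lemma borel_le b : borel (fun x => x <= b).
Proof. apply (borel_ext (fun x => ~ b < x)). intros; lra. apply borel_compl, borel_gt. Qed.

Lemma borel_Ico a b : borel (fun x => a <= x < b).
Proof. apply borel_inter; [apply borel_ge|apply borel_lt]. Qed.

Lemma borel_Icc a b : borel (fun x => a <= x <= b).
Proof. apply borel_inter; [apply borel_ge|apply borel_le]. Qed.

Lemma borel_Ioo a b : borel (fun x => a < x < b).
Proof. apply borel_inter; [apply borel_gt|apply borel_lt]. Qed.

Lemma borel_pt a : borel (fun x => x = a).
Proof. apply (borel_ext (fun x => a <= x <= a)). intros; lra. apply borel_Icc. Qed.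

Lemma borel_false : borel (fun _ => False).
Proof. apply (borel_ext (fun x => 0 <= x < 0)). intros; lra. apply borel_Ico. Qed.

Lemma isum_cv s l : infinite_sum s l -> Un_cv (fun n => sum_f_R0 s n) l.
Proof. intros H e He. destruct (H e He) as [N HN]. exists N; intros n Hn. apply HN; auto. Qed.

Lemma pm_empty (mu : prob_measure) : pm mu (fun _ => False) = 0.
Proof.
  pose proof (pm_sigma_additive mu (fun _ _ => False) (fun _ => borel_false) (fun i j _ x H _ => H)) as H.
  rewrite (pm_ext mu _ (fun _ => False)) in H by (intros; split; [intros [_ []]|tauto]).
  apply isum_cv in H. set (c := pm mu (fun _ => False)) in *.
  assert (Hs : forall n, sum_f_R0 (fun _ => c) n = INR (S n) * c).
  { induction n; simpl sum_f_R0. simpl; ring. rewrite IHn. rewrite (S_INR (S n)). ring. }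
  destruct (Req_dec c 0) as [|Hc]; auto. exfalso.
  destruct (H (Rabs c / 2)) as [N HN]. apply Rabs_pos_lt in Hc. lra.
  specialize (HN (S N) ltac:(lia)). rewrite Hs in HN. unfold Rdist in HN.
  replace (INR (S (S N)) * c - c) with (INR (S N) * c) in HN by (rewrite (S_INR (S N)); ring).
  rewrite Rabs_mult, Rabs_right in HN by (apply Rle_ge, pos_INR).
  assert (1 <= INR (S N)) by (rewrite S_INR; pose proof (pos_INR N); lra).
  apply Rabs_pos_lt in Hc. nra. Qed.

Lemma pm_add2 (mu : prob_measure) A B : borel A -> borel B -> (forall x, A x -> B x -> False) ->
  pm mu (fun x => A x \/ B x) = pm mu A + pm mu B.
Proof. intros HA HB Hd.
  set (F := fun n : nat => match n with O => A | 1%nat => B | _ => fun _ => False end).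
  assert (HF : forall n, borel (F n)) by (intros [|[|n]]; simpl; auto using borel_false).
  assert (Hdis : forall i j, i <> j -> forall x, F i x -> F j x -> False).
  { intros [|[|i]] [|[|j]] Hij x; simpl; try tauto; try lia; eauto. }
  pose proof (pm_sigma_additive mu F HF Hdis) as H.
  rewrite (pm_ext mu (fun x => exists n, F n x) (fun x => A x \/ B x)) in H.
  2:{ intros x; split. intros [[|[|n]] Hn]; simpl in Hn; tauto. intros [H0|H0]; [exists O|exists 1%nat]; auto. }
  apply isum_cv in H.
  assert (Hs : forall n, sum_f_R0 (fun n => pm mu (F n)) (S n) = pm mu A + pm mu B).
  { induction n. simpl; ring. change (sum_f_R0 (fun n => pm mu (F n)) (S (S n))) with
      (sum_f_R0 (fun n => pm mu (F n)) (S n) + pm mu (F (S (S n)))). rewrite IHn. simpl F. rewrite pm_empty; ring. }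
  apply (UL_sequence _ _ _ H). intros e He. exists 1%nat. intros n Hn.
  destruct n; [lia|]. rewrite Hs.
  unfold Rdist; rewrite Rminus_diag, Rabs_R0; lra. Qed.

Lemma pm_mono (mu : prob_measure) A B : borel A -> borel B -> (forall x, A x -> B x) -> pm mu A <= pm mu B.
Proof. intros HA HB H.
  rewrite (pm_ext mu B (fun x => A x \/ (B x /\ ~ A x))) by (intros x; split; [destruct (classic (A x)); tauto | intros [?|[? ?]]; auto]).
  rewrite pm_add2; auto. pose proof (pm_nonneg mu (fun x => B x /\ ~ A x) (borel_inter _ _ HB (borel_compl _ HA))). lra.
  apply borel_inter; auto. apply borel_compl; auto. tauto. Qed.

Lemma pm_le1 (mu : prob_measure) A : borel A -> pm mu A <= 1.
Proof. intros HA.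
  apply Rle_trans with (pm mu (fun x => (0 <= x <= 1) \/ ~ (0 <= x <= 1))).
  apply pm_mono; auto. apply borel_union2; [apply borel_Icc | apply borel_compl, borel_Icc]. intros; tauto.
  rewrite pm_add2, pm_total, pm_outside. lra. apply borel_Icc. apply borel_compl, borel_Icc. tauto. Qed.

Lemma pm_cont_below (mu : prob_measure) (A : nat -> R -> Prop) :
  (forall n, borel (A n)) -> (forall n x, A n x -> A (S n) x) ->
  Un_cv (fun n => pm mu (A n)) (pm mu (fun x => exists n, A n x)).
Proof. intros HA Hinc.
  assert (Hmono : forall i j x, (i <= j)%nat -> A i x -> A j x).
  { intros i j x Hij. induction Hij; auto. }
  set (D := fun n : nat => match n with O => A O | S k => fun x => A (S k) x /\ ~ A k x end).
  assert (HD : forall n, borel (D n)). { intros [|n]; simpl; auto. apply borel_inter; auto. apply borel_compl; auto. }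
  assert (Hdis : forall i j, i <> j -> forall x, D i x -> D j x -> False).
  { assert (forall i j x, (i < j)%nat -> D i x -> D j x -> False).
    { intros i [|j] x Hij; [lia|]. simpl. intros Hi [_ Hj]. apply Hj. apply (Hmono i j); [lia|].
      destruct i; simpl in Hi; tauto. }
    intros i j Hij x. destruct (Nat.lt_total i j) as [?|[?|?]]; [eauto|tauto|]. intros; eauto. }
  pose proof (pm_sigma_additive mu D HD Hdis) as H.
  rewrite (pm_ext mu (fun x => exists n, D n x) (fun x => exists n, A n x)) in H.
  2:{ intros x; split. intros [[|n] Hn]; simpl in Hn. eauto. exists (S n); tauto.
      intros [n Hn]. induction n. exists O; auto. destruct (classic (A n x)); auto. exists (S n); simpl; auto. }
  apply isum_cv in H.
  assert (Hs : forall n, sum_f_R0 (fun k => pm mu (D k)) n = pm mu (A n)).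
  { induction n; simpl; auto. rewrite IHn.
    rewrite (pm_ext mu (A (S n)) (fun x => A n x \/ (A (S n) x /\ ~ A n x))).
    rewrite pm_add2; auto. apply (HD (S n)). simpl. tauto.
    intros x; split. tauto. intros [?|[? ?]]; auto. }
  intros e He. destruct (H e He) as [N HN]. exists N; intros. rewrite <- Hs. apply HN; auto. Qed.


Definition G (mu : prob_measure) (b : R) : R := pm mu (fun y => 0 <= y < b).

Lemma G_range mu b : 0 <= G mu b <= 1.
Proof. unfold G; split; [apply pm_nonneg|apply pm_le1]; apply borel_Ico. Qed.

Lemma G_mono mu b b' : b <= b' -> G mu b <= G mu b'.
Proof. intros. unfold G. apply pm_mono; try apply borel_Ico. intros; lra. Qed.

Lemma G_0 mu : G mu 0 = 0.
Proof. unfold G. rewrite (pm_ext mu _ (fun _ => False)) by (intros; lra). apply pm_empty. Qed.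

Lemma cv_le f l u : Un_cv f l -> (forall k, f k <= u) -> l <= u.
Proof. intros H Hf. destruct (Rle_dec l u); auto. destruct (H (l - u)) as [N HN]; [lra|].
  specialize (HN N (le_n _)). specialize (Hf N). unfold Rdist in HN. apply Rabs_def2 in HN. lra. Qed.

Lemma cv_ge f l u K : Un_cv f l -> (forall k, (K <= k)%nat -> u <= f k) -> u <= l.
Proof. intros H Hf. destruct (Rle_dec u l); auto. destruct (H (u - l)) as [N HN]; [lra|].
  specialize (HN (max N K) ltac:(lia)). specialize (Hf (max N K) ltac:(lia)). unfold Rdist in HN. apply Rabs_def2 in HN. lra. Qed.

Lemma inv_S_decr k : / (INR (S k) + 1) < / (INR k + 1).
Proof. apply Rinv_lt_contravar. pose proof (pos_INR k); rewrite S_INR; nra. rewrite S_INR; lra. Qed.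

Lemma inv_le1 k : / (INR k + 1) <= 1.
Proof. pose proof (pos_INR k). rewrite <- Rinv_1. apply Rinv_le_contravar; lra. Qed.

Lemma G_left mu b : Un_cv (fun k => G mu (b - / (INR k + 1))) (G mu b).
Proof.
  pose proof (pm_cont_below mu (fun k y => 0 <= y < b - / (INR k + 1))) as H. cbv beta in H.
  unfold G. rewrite (pm_ext mu (fun y => 0 <= y < b) (fun x => exists n, 0 <= x < b - / (INR n + 1))).
  apply H. intros; apply borel_Ico. intros n x Hx. pose proof (inv_S_decr n). lra.
  intros x; split. intros Hx. destruct (small_inv (b - x)) as [k Hk]; [lra|]. exists k; lra.
  intros [n Hn]. pose proof (inv_pos n); lra. Qed.

Lemma G_right mu b : 0 <= b -> Un_cv (fun k => G mu (b + / (INR k + 1))) (G mu b + pm mu (fun y => y = b)).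
Proof. intros Hb.
  pose proof (pm_cont_below mu (fun k y => b + / (INR k + 1) <= y < b + 1)) as H. cbv beta in H.
  rewrite (pm_ext mu (fun x => exists n, b + / (INR n + 1) <= x < b + 1) (fun y => b < y < b + 1)) in H.
  2:{ intros x; split. intros [n Hn]. pose proof (inv_pos n); lra.
      intros Hx. destruct (small_inv (x - b)) as [k Hk]; [lra|]. exists k; lra. }
  assert (H1 : pm mu (fun y => b <= y < b + 1) = pm mu (fun y => y = b) + pm mu (fun y => b < y < b + 1)).
  { rewrite <- pm_add2. apply pm_ext. intros; lra. apply borel_pt. apply borel_Ioo. intros; lra. }
  assert (H2 : forall k, G mu (b + / (INR k + 1)) = G mu b + pm mu (fun y => b <= y < b + 1) - pm mu (fun y => b + / (INR k + 1) <= y < b + 1)).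
  { intros k. pose proof (inv_pos k). pose proof (inv_le1 k). unfold G.
    rewrite (pm_ext mu (fun y => 0 <= y < b + / (INR k + 1)) (fun y => 0 <= y < b \/ b <= y < b + / (INR k + 1))) by (intros; lra).
    rewrite (pm_ext mu (fun y => b <= y < b + 1) (fun y => b <= y < b + / (INR k + 1) \/ b + / (INR k + 1) <= y < b + 1)) by (intros; lra).
    rewrite !pm_add2; try apply borel_Ico; try (intros; lra). }
  assert (H' : Un_cv (fun n => pm mu (fun y => b + / (INR n + 1) <= y < b + 1)) (pm mu (fun y => b < y < b + 1))).
  { apply H. intros; apply borel_Ico. intros n x Hx. pose proof (inv_S_decr n). lra. }
  intros e He. destruct (H' e He) as [N HN]. exists N. intros n Hn. rewrite H2. specialize (HN n Hn).
  unfold Rdist in *. rewrite H1. replace (G mu b + (pm mu (fun y : R => y = b) + pm mu (fun y : R => b < y < b + 1)) -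
   pm mu (fun y : R => b + / (INR n + 1) <= y < b + 1) - (G mu b + pm mu (fun y : R => y = b))) with
   (- (pm mu (fun y : R => b + / (INR n + 1) <= y < b + 1) - pm mu (fun y : R => b < y < b + 1))) by ring.
  rewrite Rabs_Ropp; auto. Qed.

Lemma G_1 mu : G mu 1 = 1 - pm mu (fun y => y = 1).
Proof. unfold G. pose proof (pm_total mu) as Ht.
  rewrite (pm_ext mu (fun x => 0 <= x <= 1) (fun x => 0 <= x < 1 \/ x = 1)) in Ht by (intros; lra).
  rewrite pm_add2 in Ht. lra. apply borel_Ico. apply borel_pt. intros; lra. Qed.

Lemma sup_R_lub E : (exists m, is_lub E m) -> is_lub E (sup_R E).
Proof. intros H. unfold sup_R. destruct (excluded_middle_informative _) as [H'|H']; [|tauto].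
  destruct (constructive_indefinite_description _ H'); simpl; auto. Qed.

Lemma sup_R_spec E : (exists x, E x) -> (exists M, forall x, E x -> x <= M) -> is_lub E (sup_R E).
Proof. intros H1 [M HM]. apply sup_R_lub. destruct (completeness E) as [m Hm]; eauto. exists M; intros x Hx; auto. Qed.

Lemma sup_R_le E c : 0 <= c -> (forall x, E x -> x <= c) -> sup_R E <= c.
Proof. intros Hc H. unfold sup_R. destruct (excluded_middle_informative _) as [H'|H']; auto.
  destruct (constructive_indefinite_description _ H') as [m Hm]; simpl. destruct Hm as [_ Hm]. apply Hm. intros x Hx; auto. Qed.

Lemma sup_R_ge E r : E r -> (exists M, forall x, E x -> x <= M) -> r <= sup_R E.
Proof. intros Hr HM. destruct (sup_R_spec E) as [H _]; eauto. Qed.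

Definition Sb mu u := fun b => 0 <= b <= 1 /\ G mu b <= u.

Lemma Sb_lub mu u : 0 <= u -> is_lub (Sb mu u) (sup_R (Sb mu u)).
Proof. intros Hu. apply sup_R_spec. exists 0. split; [lra|]. rewrite G_0; auto.
  exists 1. intros x [Hx _]; lra. Qed.

Lemma Sb_range mu u : 0 <= u -> 0 <= sup_R (Sb mu u) <= 1.
Proof. intros Hu. destruct (Sb_lub mu u Hu) as [H1 H2]. split.
  apply H1. split; [lra|]. rewrite G_0; auto. apply H2. intros x [Hx _]; lra. Qed.

Lemma G_at_sup mu u : 0 <= u -> G mu (sup_R (Sb mu u)) <= u.
Proof. intros Hu. set (q := sup_R (Sb mu u)). destruct (Sb_lub mu u Hu) as [H1 H2]. fold q in H1, H2.
  destruct (Req_dec q 0) as [Hq|Hq]. rewrite Hq, G_0; auto.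
  apply (cv_le (fun k => G mu (q - / (INR k + 1)))). apply G_left.
  intros k. destruct (classic (exists s, Sb mu u s /\ q - / (INR k + 1) <= s)) as [[s [[Hs1 Hs2] Hs3]]|Hn].
  eapply Rle_trans; [apply G_mono, Hs3|auto].
  exfalso. assert (q <= q - / (INR k + 1)). apply H2. intros x Hx. destruct (Rle_dec x (q - / (INR k + 1))); auto.
  exfalso; apply Hn; exists x; split; auto; lra. pose proof (inv_pos k); lra. Qed.

Lemma quantile_spec mu u b : 0 <= u -> 0 <= b <= 1 -> (sup_R (Sb mu u) < b <-> u < G mu b).
Proof. intros Hu Hb. destruct (Sb_lub mu u Hu) as [H1 H2]. split.
  - intros Hq. destruct (Rlt_le_dec u (G mu b)); auto. assert (b <= sup_R (Sb mu u)) by (apply H1; split; auto). lra.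
  - intros HG. destruct (Rlt_le_dec (sup_R (Sb mu u)) b); auto.
    pose proof (G_mono mu _ _ r). pose proof (G_at_sup mu u Hu). lra. Qed.

Lemma ivt_G mu : no_atoms mu -> forall u, 0 <= u < 1 -> exists b, 0 <= b <= 1 /\ G mu b = u.
Proof. intros Hna u Hu. set (q := sup_R (Sb mu u)). exists q.
  pose proof (Sb_range mu u ltac:(lra)) as Hr. fold q in Hr. split; auto.
  pose proof (G_at_sup mu u ltac:(lra)) as Hle. fold q in Hle.
  destruct (Req_dec q 1) as [Hq|Hq].
  { rewrite Hq, G_1, (Hna 1) in *; lra. }
  destruct (Sb_lub mu u ltac:(lra)) as [H1 H2]. fold q in H1, H2.
  assert (u <= G mu q + pm mu (fun y => y = q)).
  { apply (cv_ge (fun k => G mu (q + / (INR k + 1))) _ _ 0%nat (G_right mu q ltac:(lra))).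
    intros k _. destruct (Rle_dec (q + / (INR k + 1)) 1).
    - destruct (Rlt_le_dec u (G mu (q + / (INR k + 1)))); [lra|].
      assert (q + / (INR k + 1) <= q) by (apply H1; split; auto; pose proof (inv_pos k); lra).
      pose proof (inv_pos k); lra.
    - eapply Rle_trans; [|apply G_mono with (b := 1); lra]. rewrite G_1, (Hna 1); lra. }
  rewrite (Hna q) in H; lra. Qed.


Definition Qf mu u := sup_R (Sb mu u).

Lemma count_transfer mu (y : nat -> R) N b :
  (forall i, (1 <= i <= N)%nat -> 0 <= y i) -> 0 <= b <= 1 ->
  count_below (fun i => Qf mu (y i)) N b = count_below y N (G mu b).
Proof. intros Hy Hb. induction N; simpl; auto.
  rewrite IHN by (intros; apply Hy; lia).
  destruct (Rlt_dec (Qf mu (y (S N))) b) as [H|H]; destruct (Rlt_dec (y (S N)) (G mu b)) as [H'|H']; auto;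
  exfalso; pose proof (quantile_spec mu (y (S N)) b (Hy (S N) ltac:(lia)) Hb); unfold Qf in *; tauto. Qed.

Lemma count_below_range x N b : 0 <= count_below x N b <= INR N.
Proof. induction N; simpl count_below. simpl; lra. rewrite S_INR. destruct (Rlt_dec _ _); lra. Qed.

Lemma disc_transfer mu (y : nat -> R) N B :
  (forall i, (1 <= i <= N)%nat -> 0 <= y i) -> 0 <= B ->
  (forall u, 0 <= u <= 1 -> Rabs (u - count_below y N u / INR N) <= B) ->
  star_disc mu (fun i => Qf mu (y i)) N <= B.
Proof. intros Hy HB H. unfold star_disc. apply sup_R_le; auto.
  intros r [b [Hb ->]]. unfold empirical. rewrite count_transfer; auto. apply H. apply G_range. Qed.

Lemma Qf_range mu u : 0 <= u -> 0 <= Qf mu u <= 1.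
Proof. apply Sb_range. Qed.

Lemma exists_nat_below z : 0 < z -> exists j : nat, INR j < z <= INR j + 1.
Proof. intros Hz. destruct (small_inv (/ z)) as [M HM]. apply Rinv_0_lt_compat; auto.
  assert (z < INR M + 1). { apply Rinv_lt_contravar in HM. rewrite !Rinv_inv in HM; auto.
    apply Rmult_lt_0_compat; [apply inv_pos | apply Rinv_0_lt_compat; auto]. }
  clear HM. revert z Hz H. induction M; intros z Hz H.
  exists O. simpl in *. lra.
  rewrite S_INR in H. destruct (Rle_dec z (INR M)) as [H1|H1].
  apply IHM; auto; lra. destruct (Rle_dec z (INR M + 1)) as [H2|H2].
  exists M; lra. exists (S M). rewrite S_INR. lra. Qed.

Lemma part1_count N u : (1 <= N)%nat -> 0 <= u <= 1 ->
  Rabs (u - count_below (fun i => (2 * INR i - 1) / (2 * INR N)) N u / INR N) <= 1 / INR N.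
Proof. intros HN Hu. assert (HN' : 1 <= INR N) by (apply (le_INR 1); auto).
  destruct (exists_nat_below (INR N * u + /2)) as [j [Hj1 Hj2]]. nra.
  assert (Hc : forall K, count_below (fun i => (2 * INR i - 1) / (2 * INR N)) K u = INR (Nat.min K j)).
  { induction K. simpl; auto. cbn [count_below]. rewrite IHK.
    destruct (Rlt_dec _ _) as [H|H].
    - assert (S K <= j)%nat. { destruct (le_lt_dec (S K) j); auto. exfalso.
        apply (le_INR (S j)) in l. rewrite S_INR in l. apply Rmult_lt_compat_r with (r := 2 * INR N) in H; [|lra].
        unfold Rdiv in H. rewrite Rmult_assoc, Rinv_l, Rmult_1_r in H by lra. rewrite S_INR in H, l; lra. }
      rewrite !Nat.min_l by lia. rewrite S_INR; auto.
    - assert (j <= K)%nat. { destruct (le_lt_dec j K); auto. exfalso. apply H.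
        apply (le_INR (S K)) in l. rewrite S_INR in l.
        apply Rmult_lt_reg_r with (r := 2 * INR N); [lra|]. unfold Rdiv. rewrite Rmult_assoc, Rinv_l, Rmult_1_r by lra. rewrite S_INR; nra. }
      rewrite !Nat.min_r by lia. lra. }
  rewrite Hc. destruct (le_lt_dec j N).
  - rewrite Nat.min_r by auto. replace (u - INR j / INR N) with ((INR N * u - INR j) / INR N) by (field; lra).
    unfold Rdiv. rewrite Rabs_mult, Rabs_inv, (Rabs_right (INR N)) by lra. apply Rmult_le_compat_r.
    apply Rlt_le, Rinv_0_lt_compat; lra. apply Rabs_le; lra.
  - apply (le_INR (S N)) in l. rewrite S_INR in l. nra. Qed.

Fixpoint vdc (k n : nat) : R :=
  match k with O => 0 | S k' => (if Nat.even n then 0 else / 2) + vdc k' (Nat.div2 n) / 2 end.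
Definition phi n := vdc n n.

Lemma vdc_stable k : forall n, (n <= k)%nat -> vdc (S k) n = vdc k n.
Proof. induction k; intros n Hn.
  - assert (n = O) by lia; subst. simpl. lra.
  - change (vdc (S (S k)) n) with ((if Nat.even n then 0 else / 2) + vdc (S k) (Nat.div2 n) / 2).
    change (vdc (S k) n) with ((if Nat.even n then 0 else / 2) + vdc k (Nat.div2 n) / 2).
    rewrite IHk; auto. destruct n. simpl; lia. pose proof (Nat.lt_div2 (S n)). lia. Qed.

Lemma vdc_phi k n : (n <= k)%nat -> vdc k n = phi n.
Proof. intros H. unfold phi. induction H; auto. rewrite vdc_stable; auto. Qed.

Lemma phi_even r : phi (2 * r) = phi r / 2.
Proof. destruct r. unfold phi; simpl; lra.
  unfold phi at 1. replace (2 * S r)%nat with (S (S (2 * r))) by lia.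
  change (vdc (S (S (2 * r))) (S (S (2 * r)))) with ((if Nat.even (S (S (2 * r))) then 0 else / 2) + vdc (S (2*r)) (Nat.div2 (S (S (2 * r)))) / 2).
  replace (S (S (2 * r))) with (2 * S r)%nat by lia. rewrite Nat.even_even, Nat.div2_double.
  rewrite vdc_phi by lia. lra. Qed.

Lemma phi_odd r : phi (2 * r + 1) = / 2 + phi r / 2.
Proof. unfold phi at 1. replace (2 * r + 1)%nat with (S (2 * r)) at 1 by lia.
  change (vdc (S (2 * r)) (2 * r + 1)) with ((if Nat.even (2 * r + 1) then 0 else / 2) + vdc (2*r) (Nat.div2 (2 * r + 1)) / 2).
  rewrite Nat.even_odd, Nat.div2_odd'. rewrite vdc_phi by lia. auto. Qed.

Lemma vdc_range k n : 0 <= vdc k n < 1.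
Proof. revert n; induction k; intros n; simpl. lra. specialize (IHk (Nat.div2 n)). destruct (Nat.even n); lra. Qed.

Lemma phi_range n : 0 <= phi n < 1.
Proof. apply vdc_range. Qed.

Definition ind (b : bool) := if b then 1 else 0.
Definition Fv N u := sumR (fun r => if Rlt_dec (phi r) u then 1 else 0) N.

Lemma count_Fv N u : count_below (fun i => phi (pred i)) N u = Fv N u.
Proof. induction N; simpl; auto. rewrite IHN. auto. Qed.

Lemma sumR_even_odd (g : nat -> R) M :
  sumR g (2 * M) = sumR (fun s => g (2 * s)%nat) M + sumR (fun s => g (2 * s + 1)%nat) M.
Proof. induction M. simpl; lra. replace (2 * S M)%nat with (S (S (2 * M))) by lia. cbn [sumR].
  rewrite IHM. replace (S (2 * M)) with (2 * M + 1)%nat by lia. lra. Qed.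

Lemma Fv_split_even M u : Fv (2 * M) u = Fv M (2 * u) + Fv M (2 * u - 1).
Proof. unfold Fv. rewrite sumR_even_odd. f_equal; apply sumR_ext; intros i _.
  rewrite phi_even. destruct (Rlt_dec _ _), (Rlt_dec _ _); auto; lra.
  rewrite phi_odd. destruct (Rlt_dec _ _), (Rlt_dec _ _); auto; lra. Qed.

Lemma Fv_split_odd M u : Fv (2 * M + 1) u = Fv (M + 1) (2 * u) + Fv M (2 * u - 1).
Proof. replace (2 * M + 1)%nat with (S (2 * M)) by lia. replace (M + 1)%nat with (S M) by lia.
  change (Fv (S (2*M)) u) with (Fv (2*M) u + (if Rlt_dec (phi (2*M)) u then 1 else 0)).
  change (Fv (S M) (2*u)) with (Fv M (2*u) + (if Rlt_dec (phi M) (2*u) then 1 else 0)).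
  rewrite Fv_split_even, phi_even.
  destruct (Rlt_dec (phi M / 2) u), (Rlt_dec (phi M) (2 * u)); lra. Qed.

Lemma Fv_low N v : v <= 0 -> Fv N v = 0.
Proof. intros Hv. unfold Fv. transitivity (sumR (fun _ => 0) N); [|apply sumR_zero]. apply sumR_ext; intros.
  destruct (Rlt_dec _ _); auto. pose proof (phi_range i); lra. Qed.

Lemma Fv_high N v : 1 <= v -> Fv N v = INR N.
Proof. intros Hv. unfold Fv. transitivity (sumR (fun _ => 1) N); [|rewrite sumR_const; ring]. apply sumR_ext; intros.
  destruct (Rlt_dec _ _); auto. pose proof (phi_range i); lra. Qed.

Definition beta N := 1 + ln (INR N) / (2 * ln (3 / 2)).

Lemma ln32_pos : 0 < ln (3 / 2).
Proof. rewrite <- ln_1. apply ln_increasing; lra. Qed.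

Lemma beta_mono a b : (1 <= a <= b)%nat -> beta a <= beta b.
Proof. intros H. unfold beta. pose proof ln32_pos.
  assert (ln (INR a) <= ln (INR b)). { destruct (Nat.eq_dec a b). subst; lra.
   apply Rlt_le, ln_increasing. apply (lt_INR 0); lia. apply lt_INR; lia. }
  unfold Rdiv. apply Rplus_le_compat_l, Rmult_le_compat_r; auto. apply Rlt_le, Rinv_0_lt_compat; lra. Qed.

Lemma ln_INR_nonneg a : (1 <= a)%nat -> 0 <= ln (INR a).
Proof. intros. rewrite <- ln_1. destruct (Nat.eq_dec a 1). subst; simpl; lra.
  apply Rlt_le, ln_increasing; try lra. apply (lt_INR 1); lia. Qed.

Lemma beta_ge1 a : (1 <= a)%nat -> 1 <= beta a.
Proof. intros H. unfold beta. pose proof ln32_pos. pose proof (ln_INR_nonneg a H).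
  assert (0 <= ln (INR a) / (2 * ln (3 / 2))) by (apply Rmult_le_pos; auto; apply Rlt_le, Rinv_0_lt_compat; lra). lra. Qed.

Lemma beta_step a N : (1 <= a)%nat -> 3 * INR a <= 2 * INR N -> beta a + / 2 <= beta N.
Proof. intros Ha H. unfold beta. pose proof ln32_pos.
  assert (HaR : 1 <= INR a) by (apply (le_INR 1); auto).
  assert (ln (INR a) <= ln (INR N) - ln (3 / 2)).
  { replace (ln (INR N) - ln (3/2)) with (ln (INR N * / (3 / 2))).
    destruct (Req_dec (INR a) (INR N * / (3/2))) as [E|E]. rewrite E; lra.
    apply Rlt_le, ln_increasing. lra. assert (INR a <= INR N * / (3/2)). apply Rmult_le_reg_r with (3/2). lra.
    rewrite Rmult_assoc, Rinv_l, Rmult_1_r; lra. lra.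
    assert (0 < INR N) by lra. rewrite ln_mult, ln_Rinv; try lra. }
  apply Rle_trans with (1 + (ln (INR N) - ln (3 / 2)) / (2 * ln (3 / 2)) + / 2).
  apply Rplus_le_compat_r, Rplus_le_compat_l. unfold Rdiv; apply Rmult_le_compat_r; auto. apply Rlt_le, Rinv_0_lt_compat; lra.
  right. field. lra. Qed.

Definition cl u := if Rle_dec u 0 then 0 else if Rle_dec 1 u then 1 else u.

Lemma Fv_1 u : Fv 1 u = if Rlt_dec 0 u then 1 else 0.
Proof. unfold Fv; simpl. replace (phi 0) with 0 by (unfold phi; simpl; auto). lra. Qed.

Lemma Fv_step a b N u : (1 <= b)%nat -> (b <= a)%nat -> (a <= b + 1)%nat -> (a + b = N)%nat -> (3 * a <= 2 * N)%nat ->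
  Fv N u = Fv a (2 * u) + Fv b (2 * u - 1) ->
  Rabs (Fv a (2 * u) - INR a * cl (2 * u)) <= beta a ->
  Rabs (Fv b (2 * u - 1) - INR b * cl (2 * u - 1)) <= beta b ->
  Rabs (Fv N u - INR N * cl u) <= beta N.
Proof. intros H1 H2 H3 H4 H5 Hs Ha Hb.
  assert (HbN : beta a + / 2 <= beta N). { apply beta_step. lia. apply le_INR in H5. rewrite !mult_INR in H5. simpl in H5. lra. }
  pose proof (beta_mono b a ltac:(lia)). pose proof (beta_ge1 b H1).
  assert (HN : INR a + INR b = INR N) by (rewrite <- plus_INR; f_equal; auto).
  assert (Hab : INR b <= INR a <= INR b + 1) by (split; [apply le_INR; auto| rewrite <- S_INR; apply le_INR; lia]).
  unfold cl. destruct (Rle_dec u 0).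
  { rewrite Fv_low by lra. rewrite Rmult_0_r, Rminus_0_r, Rabs_R0. lra. }
  destruct (Rle_dec 1 u).
  { rewrite Fv_high by lra. rewrite Rmult_1_r, Rminus_diag, Rabs_R0. lra. }
  rewrite Hs. destruct (Rle_dec u (/ 2)).
  - rewrite (Fv_low b) by lra. unfold cl in Ha. destruct (Rle_dec (2 * u) 0); [lra|].
    destruct (Rle_dec 1 (2 * u)).
    + replace (Fv a (2 * u) + 0 - INR N * u) with ((Fv a (2 * u) - INR a * 1) + (INR a - INR N * u)) by ring.
      eapply Rle_trans; [apply Rabs_triang|]. assert (Rabs (INR a - INR N * u) <= / 2) by (assert (u = /2) by lra; subst u; apply Rabs_le; lra). lra.
    + replace (Fv a (2 * u) + 0 - INR N * u) with ((Fv a (2 * u) - INR a * (2 * u)) + u * (2 * INR a - INR N)) by ring.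
      eapply Rle_trans; [apply Rabs_triang|]. assert (Rabs (u * (2 * INR a - INR N)) <= / 2) by (apply Rabs_le; nra). lra.
  - rewrite (Fv_high a) by lra. unfold cl in Hb. destruct (Rle_dec (2 * u - 1) 0); [lra|].
    destruct (Rle_dec 1 (2 * u - 1)); [lra|].
    replace (INR a + Fv b (2 * u - 1) - INR N * u) with ((Fv b (2 * u - 1) - INR b * (2 * u - 1)) + (INR a - INR b) * (1 - u)) by (rewrite <- HN; ring).
    eapply Rle_trans; [apply Rabs_triang|]. assert (Rabs ((INR a - INR b) * (1 - u)) <= / 2) by (apply Rabs_le; nra). lra. Qed.

Lemma Fv_bound N : (1 <= N)%nat -> forall u, Rabs (Fv N u - INR N * cl u) <= beta N.
Proof. induction N as [N IH] using lt_wf_ind. intros HN u.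
  destruct (Nat.eq_dec N 1) as [->|HN1].
  { rewrite Fv_1. unfold cl, beta. simpl INR. rewrite ln_1. unfold Rdiv; rewrite Rmult_0_l, Rplus_0_r.
    destruct (Rle_dec u 0); destruct (Rlt_dec 0 u); try lra. rewrite Rmult_0_r, Rminus_diag, Rabs_R0; lra.
    destruct (Rle_dec 1 u). rewrite Rmult_1_r, Rminus_diag, Rabs_R0; lra. rewrite Rmult_1_l. apply Rabs_le; lra. }
  pose proof (Nat.div_mod N 2 ltac:(lia)) as Hd. pose proof (Nat.mod_upper_bound N 2 ltac:(lia)) as Hm.
  set (M := (N / 2)%nat) in *. set (r := (N mod 2)%nat) in *.
  assert (r = O \/ r = 1%nat) as [Hr|Hr] by lia; rewrite Hr in Hd.
  - assert (HM : N = (2 * M)%nat) by lia.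
    apply (Fv_step M M N); try lia. rewrite HM. apply Fv_split_even. apply IH; lia. apply IH; lia.
  - assert (HM : N = (2 * M + 1)%nat) by lia.
    apply (Fv_step (M + 1) M N); try lia. rewrite HM. apply Fv_split_odd. apply IH; lia. apply IH; lia. Qed.

Definition Cvdc := / ln 2 + / (2 * ln (3 / 2)).

Lemma ln2_pos : 0 < ln 2.
Proof. rewrite <- ln_1. apply ln_increasing; lra. Qed.

Lemma part2_count N u : (2 <= N)%nat -> 0 <= u <= 1 ->
  Rabs (u - count_below (fun i => phi (pred i)) N u / INR N) <= Cvdc * ln (INR N) / INR N.
Proof. intros HN Hu. rewrite count_Fv. assert (HNR : 2 <= INR N) by (apply (le_INR 2); auto).
  pose proof (Fv_bound N ltac:(lia) u) as H.
  assert (Hc : INR N * cl u = INR N * u). { unfold cl. destruct (Rle_dec u 0). assert (u = 0) by lra. subst; ring.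
    destruct (Rle_dec 1 u). assert (u = 1) by lra. subst; ring. auto. }
  rewrite Hc in H.
  assert (Hl : ln 2 <= ln (INR N)). { destruct (Req_dec (INR N) 2) as [E|E]. rewrite E; lra. apply Rlt_le, ln_increasing; lra. }
  pose proof ln2_pos. pose proof ln32_pos.
  assert (beta N <= Cvdc * ln (INR N)).
  { unfold beta, Cvdc. rewrite Rmult_plus_distr_r. unfold Rdiv. rewrite (Rmult_comm (/ (2 * ln (3/2)))).
    apply Rplus_le_compat_r. apply Rmult_le_reg_l with (ln 2); auto. rewrite <- Rmult_assoc, Rinv_r; lra. }
  replace (u - Fv N u / INR N) with (- (Fv N u - INR N * u) / INR N) by (field; lra).
  unfold Rdiv. rewrite Rabs_mult, Rabs_Ropp, Rabs_inv, (Rabs_right (INR N)) by lra.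
  apply Rmult_le_compat_r. apply Rlt_le, Rinv_0_lt_compat; lra. lra. Qed.


Definition pw k := (2 ^ k)%nat.
Lemma pw_S k : pw (S k) = (2 * pw k)%nat. Proof. reflexivity. Qed.
Lemma pw_pos k : (0 < pw k)%nat. Proof. unfold pw. apply Nat.neq_0_lt_0, Nat.pow_nonzero. lia. Qed.
Lemma pw_add a b : pw (a + b) = (pw a * pw b)%nat. Proof. unfold pw. apply Nat.pow_add_r. Qed.

Lemma div_block q d r : (r < d)%nat -> ((q * d + r) / d = q)%nat.
Proof. intros H. rewrite Nat.div_add_l by lia. rewrite Nat.div_small by auto. lia. Qed.

Definition msg j m : R := if Nat.even (m / pw (j - 1)) then 1 else -1.

Fixpoint Qg (s : nat -> nat -> R) (l m : nat) : R :=
  match l with O => 1 | S l' => Qg s l' m * (1 + / 4 * (s (S l') (m / pw (S l'))%nat * msg (S l') m)) end.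

Lemma msg_first l b r : (r < pw l)%nat -> msg (S l) ((2 * b) * pw l + r) = 1.
Proof. intros H. unfold msg. replace (S l - 1)%nat with l by lia. rewrite div_block by auto.
  rewrite Nat.even_even. auto. Qed.

Lemma msg_second l b r : (r < pw l)%nat -> msg (S l) ((2 * b + 1) * pw l + r) = -1.
Proof. intros H. unfold msg. replace (S l - 1)%nat with l by lia. rewrite div_block by auto.
  rewrite Nat.even_odd. auto. Qed.

Lemma idx_first l b r : (r < pw l)%nat -> (((2 * b) * pw l + r) / pw (S l) = b)%nat.
Proof. intros H. rewrite pw_S. replace ((2 * b) * pw l + r)%nat with (b * (2 * pw l) + r)%nat by lia.
  apply div_block. lia. Qed.

Lemma idx_second l b r : (r < pw l)%nat -> (((2 * b + 1) * pw l + r) / pw (S l) = b)%nat.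
Proof. intros H. rewrite pw_S. replace ((2 * b + 1) * pw l + r)%nat with (b * (2 * pw l) + (pw l + r))%nat by lia.
  apply div_block. lia. Qed.

Lemma block_split2 (F : nat -> nat -> R) l b :
  sumR (fun r => F r (b * pw (S l) + r)%nat) (pw (S l)) =
  sumR (fun r => F r ((2 * b) * pw l + r)%nat) (pw l) + sumR (fun r => F (pw l + r)%nat ((2 * b + 1) * pw l + r)%nat) (pw l).
Proof. rewrite pw_S. replace (2 * pw l)%nat with (pw l + pw l)%nat by lia. rewrite sumR_add.
  f_equal; apply sumR_ext; intros; f_equal; lia. Qed.

Lemma block_split (F : nat -> R) l b :
  sumR (fun r => F (b * pw (S l) + r)%nat) (pw (S l)) =
  sumR (fun r => F ((2 * b) * pw l + r)%nat) (pw l) + sumR (fun r => F ((2 * b + 1) * pw l + r)%nat) (pw l).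
Proof. apply (block_split2 (fun _ => F)). Qed.

Definition sbound (s : nat -> nat -> R) := forall j M, -1 <= s j M <= 1.

Lemma Qg_nonneg s l m : sbound s -> 0 <= Qg s l m.
Proof. intros Hs. induction l; simpl. lra. apply Rmult_le_pos; auto.
  specialize (Hs (S l) (m / pw (S l))%nat). unfold msg. destruct (Nat.even _); nra. Qed.

Lemma Qg_first s l b r : (r < pw l)%nat ->
  Qg s (S l) ((2 * b) * pw l + r) = Qg s l ((2 * b) * pw l + r) * (1 + / 4 * s (S l) b).
Proof. intros H. cbn [Qg]. rewrite idx_first, msg_first by auto. f_equal; ring. Qed.

Lemma Qg_second s l b r : (r < pw l)%nat ->
  Qg s (S l) ((2 * b + 1) * pw l + r) = Qg s l ((2 * b + 1) * pw l + r) * (1 - / 4 * s (S l) b).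
Proof. intros H. cbn [Qg]. rewrite idx_second, msg_second by auto. f_equal; ring. Qed.

Lemma Qg_mass s l : forall b, sumR (fun r => Qg s l (b * pw l + r)%nat) (pw l) = INR (pw l).
Proof. induction l; intros b.
  - simpl. lra.
  - rewrite block_split. rewrite (sumR_ext _ (fun r => Qg s l ((2 * b) * pw l + r) * (1 + / 4 * s (S l) b))).
    2:{ intros; apply Qg_first; auto. }
    rewrite (sumR_ext (fun r => Qg s (S l) ((2 * b + 1) * pw l + r)) (fun r => Qg s l ((2 * b + 1) * pw l + r) * (1 - / 4 * s (S l) b))).
    2:{ intros; apply Qg_second; auto. }
    rewrite !sumR_scalr, !IHl. rewrite pw_S, mult_INR. simpl INR. ring. Qed.

Lemma Qg_moment s l : sbound s -> forall b,
  Rabs (sumR (fun r => INR r * Qg s l (b * pw l + r)%nat) (pw l) - INR (pw l) * (INR (pw l) - 1) / 2)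
  <= / 4 * INR (pw l) ^ 2 / 2.
Proof. intros Hs. induction l; intros b.
  - simpl. apply Rabs_le; lra.
  - set (u := INR (pw l)). assert (Hu : INR (pw (S l)) = 2 * u) by (unfold u; rewrite pw_S, mult_INR; simpl; ring).
    rewrite (block_split2 (fun r m => INR r * Qg s (S l) m)), Hu.
    rewrite (sumR_ext _ (fun r => INR r * Qg s l ((2 * b) * pw l + r) * (1 + / 4 * s (S l) b))).
    2:{ intros. rewrite Qg_first; auto. ring. }
    rewrite (sumR_ext (fun r => INR (pw l + r) * Qg s (S l) ((2 * b + 1) * pw l + r))
      (fun r => (INR r * Qg s l ((2 * b + 1) * pw l + r) + u * Qg s l ((2 * b + 1) * pw l + r)) * (1 - / 4 * s (S l) b))).
    2:{ intros. rewrite Qg_second; auto. rewrite plus_INR. fold u. ring. }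
    rewrite !sumR_scalr, sumR_plus, sumR_scal, Qg_mass. fold u.
    set (W1 := sumR (fun r => INR r * Qg s l (2 * b * pw l + r)) (pw l)) in *.
    set (W2 := sumR (fun r => INR r * Qg s l ((2 * b + 1) * pw l + r)) (pw l)) in *.
    pose proof (IHl (2 * b)%nat) as H1. pose proof (IHl (2 * b + 1)%nat) as H2. fold u W1 W2 in H1, H2.
    set (c := s (S l) b). assert (Hc : -1 <= c <= 1) by apply Hs.
    set (I0 := u * (u - 1) / 2) in *.
    clearbody u W1 W2 c. subst I0. replace (W1 * (1 + / 4 * c) + (W2 + u * u) * (1 - / 4 * c) - 2 * u * (2 * u - 1) / 2)
      with ((1 + / 4 * c) * (W1 - u * (u - 1) / 2) + (1 - / 4 * c) * (W2 - u * (u - 1) / 2) - / 4 * c * u ^ 2) by field.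
    apply Rabs_le2 in H1; apply Rabs_le2 in H2. apply Rabs_le.
    assert (0 <= u ^ 2) by nra. split; nra. Qed.


Definition del n := / INR (pw (n + 2)).
Definition tt n p := INR p * del n.
Definition tb n j p := (p / pw (n + 1 - j))%nat.
Definition ts n j p : R := if Nat.even (p / pw (n - j)) then 1 else -1.
Definition nonempty n (y : nat -> R) j P M : Prop :=
  exists i, (M * pw j < i < M * pw j + pw j)%nat /\
    INR (P * pw (n + 1 - j)) * del n <= y i < INR (P * pw (n + 1 - j) + pw (n + 1 - j)) * del n.
Definition sig n y p j M : R := if excluded_middle_informative (nonempty n y j (tb n j p) M) then 0 else ts n j p.
Definition Pr n y l p m := Qg (sig n y p) l m.
Definition fl n y j p m := sig n y p j (m / pw j)%nat * msg j m.
Definition Ef (y : nat -> R) t m := count_below y m t - INR m * t.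

Lemma del_pos n : 0 < del n.
Proof. unfold del. apply Rinv_0_lt_compat. apply (lt_INR 0), pw_pos. Qed.

Lemma sig_bound n y p : sbound (sig n y p).
Proof. intros j M. unfold sig, ts. destruct (excluded_middle_informative _); [lra|]. destruct (Nat.even _); lra. Qed.

Lemma Qg_ext s1 s2 l m : (forall j, (1 <= j <= l)%nat -> forall M, s1 j M = s2 j M) -> Qg s1 l m = Qg s2 l m.
Proof. induction l; intros H; simpl; auto. rewrite IHl by (intros; apply H; lia). rewrite H by lia. auto. Qed.

Lemma Pr_succ n y l p m : Pr n y (S l) p m = Pr n y l p m + / 4 * fl n y (S l) p m * Pr n y l p m.
Proof. unfold Pr, fl. cbn [Qg]. ring. Qed.

Lemma Pr_minus1 n y l p m : Pr n y l p m - 1 = sumR (fun k => / 4 * fl n y (S k) p m * Pr n y k p m) l.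
Proof. induction l; cbn [sumR]. unfold Pr; simpl; ring. rewrite <- IHl, Pr_succ. ring. Qed.

Lemma cnt_dec (y : nat -> R) base L a b t m' : (m' < L)%nat -> a <= t < b ->
  (forall i, (base < i < base + L)%nat -> ~ (a <= y i < b)) ->
  count_below y (base + m') t = count_below y base t + sumR (fun r => if Rlt_dec (y (base + r + 1)%nat) a then 1 else 0) m'.
Proof. intros Hm Ht Hi. induction m'. rewrite Nat.add_0_r; simpl; ring.
  rewrite Nat.add_succ_r. cbn [count_below sumR]. rewrite IHm' by lia.
  replace (S (base + m')) with (base + m' + 1)%nat by lia.
  specialize (Hi (base + m' + 1)%nat ltac:(lia)).
  destruct (Rlt_dec (y (base + m' + 1)%nat) t), (Rlt_dec (y (base + m' + 1)%nat) a); try lra; exfalso; apply Hi; lra. Qed.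

Lemma sum2_split (a1 b1 a2 b2 a3 b3 : nat -> R) A B :
  sumR (fun i => sumR (fun j => a1 i * b1 j + a2 i * b2 j - a3 i * b3 j) B) A =
  sumR a1 A * sumR b1 B + sumR a2 A * sumR b2 B - sumR a3 A * sumR b3 B.
Proof. rewrite <- !sumR_prod. rewrite <- sumR_plus, <- sumR_minus. apply sumR_ext; intros.
  rewrite <- sumR_plus, <- sumR_minus. auto. Qed.

Lemma box k d y P M :
  sumR (fun p' => sumR (fun m' =>
     Ef y (tt (S k + d) (P * pw (S d) + p')) (M * pw (S k) + m') *
     fl (S k + d) y (S k) (P * pw (S d) + p') (M * pw (S k) + m') *
     Pr (S k + d) y k (P * pw (S d) + p') (M * pw (S k) + m')) (pw (S k))) (pw (S d))
  <= - (3/4) * del (S k + d) * INR (pw d) ^ 2 * INR (pw k) ^ 2 *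
     (1 - (if excluded_middle_informative (nonempty (S k + d) y (S k) P M) then 1 else 0)).
Proof.
  set (n := (S k + d)%nat).
  assert (Hw : (n + 1 - S k = S d)%nat) by (unfold n; lia).
  assert (Hq : (n - S k = d)%nat) by (unfold n; lia).
  assert (Htb : forall p', (p' < pw (S d))%nat -> tb n (S k) (P * pw (S d) + p') = P).
  { intros. unfold tb. rewrite Hw. apply div_block; auto. }
  assert (Hmb : forall m', (m' < pw (S k))%nat -> ((M * pw (S k) + m') / pw (S k) = M)%nat).
  { intros. apply div_block; auto. }
  pose proof (del_pos n) as Hdel.
  destruct (excluded_middle_informative (nonempty n y (S k) P M)) as [Hne|Hne].
  { rewrite (sumR_ext _ (fun _ => 0)). rewrite sumR_zero. lra.
    intros p' Hp. rewrite (sumR_ext _ (fun _ => 0)). apply sumR_zero.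
    intros m' Hm. unfold fl, sig. rewrite Htb, Hmb by auto.
    destruct (excluded_middle_informative _); [ring|tauto]. }
  set (w := pw (S d)). set (L := pw (S k)).
  set (a := INR (P * w) * del n). set (b := INR (P * w + w) * del n).
  assert (Hemp : forall i, (M * L < i < M * L + L)%nat -> ~ (a <= y i < b)).
  { intros i Hi Hy. apply Hne. exists i. unfold a, b in Hy. rewrite Hw. split; auto. }
  assert (Hprk : forall p' m', (p' < w)%nat -> Pr n y k (P * w + p') m' = Pr n y k (P * w) m').
  { intros p' m' Hp. unfold Pr. apply Qg_ext. intros j Hj M'. unfold sig.
    assert (E1 : tb n j (P * w + p') = tb n j (P * w)).
    { unfold tb. replace (n + 1 - j)%nat with (S d + (S k - j))%nat by (unfold n; lia). rewrite pw_add.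
      rewrite <- !Nat.Div0.div_div by (pose proof (pw_pos (S d)); pose proof (pw_pos (S k - j)); lia).
      fold w. rewrite div_block by auto. rewrite <- (Nat.add_0_r (P * w)), div_block by (apply pw_pos). auto. }
    assert (E2 : ts n j (P * w + p') = ts n j (P * w)).
    { unfold ts. replace (n - j)%nat with (S d + (k - j))%nat by (unfold n; lia). rewrite pw_add.
      rewrite <- !Nat.Div0.div_div by (pose proof (pw_pos (S d)); pose proof (pw_pos (k - j)); lia).
      fold w. rewrite div_block by auto. rewrite <- (Nat.add_0_r (P * w)), div_block by (apply pw_pos). auto. }
    rewrite E1, E2. auto. }
  set (g := fun m => Pr n y k (P * w) m).
  set (a1 := fun p' => count_below y (M * L) (tt n (P * w + p')) * ts n (S k) (P * w + p')).
  set (b1 := fun m' => msg (S k) (M * L + m') * g (M * L + m')%nat).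
  set (a2 := fun p' => ts n (S k) (P * w + p')).
  set (b2 := fun m' => sumR (fun r => if Rlt_dec (y (M * L + r + 1)%nat) a then 1 else 0) m' * msg (S k) (M * L + m') * g (M * L + m')%nat).
  set (a3 := fun p' => tt n (P * w + p') * ts n (S k) (P * w + p')).
  set (b3 := fun m' => INR (M * L + m') * msg (S k) (M * L + m') * g (M * L + m')%nat).
  rewrite (sumR_ext _ (fun p' => sumR (fun m' => a1 p' * b1 m' + a2 p' * b2 m' - a3 p' * b3 m') L)).
  2:{ intros p' Hp. apply sumR_ext. intros m' Hm. unfold fl, sig. rewrite Htb, Hmb by auto.
      destruct (excluded_middle_informative _) as [Hx|_]; [tauto|].
      rewrite Hprk by auto. unfold Ef. rewrite (cnt_dec y (M * L) L a b) by (auto; unfold tt, a, b; split;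
        apply Rmult_le_compat_r || apply Rmult_lt_compat_r; try lra; try (apply le_INR || apply lt_INR); lia).
      unfold a1, b1, a2, b2, a3, b3, g. ring. }
  rewrite sum2_split.
  assert (Hb1 : sumR b1 L = 0).
  { unfold b1, L. pose proof (block_split (fun m => msg (S k) m * g m) k M) as HB. cbv beta in HB. rewrite HB.
    rewrite (sumR_ext _ (fun r => g (2 * M * pw k + r)%nat)) by (intros; rewrite msg_first by auto; ring).
    rewrite (sumR_ext (fun r => msg (S k) ((2 * M + 1) * pw k + r) * g ((2 * M + 1) * pw k + r)%nat)
       (fun r => -1 * g ((2 * M + 1) * pw k + r)%nat)) by (intros; rewrite msg_second by auto; ring).
    rewrite (sumR_scal (-1)). unfold g, Pr. rewrite !Qg_mass. ring. }
  assert (Ha2 : sumR a2 w = 0).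
  { unfold a2, w. pose proof (block_split (fun p => ts n (S k) p) d P) as HB. cbv beta in HB. rewrite HB.
    rewrite (sumR_ext _ (fun _ => 1)). rewrite (sumR_ext (fun r => ts n (S k) ((2 * P + 1) * pw d + r)) (fun _ => -1)).
    rewrite !sumR_const. ring.
    intros. unfold ts. rewrite Hq, div_block, Nat.even_odd by auto. auto.
    intros. unfold ts. rewrite Hq, div_block, Nat.even_even by auto. auto. }
  assert (Ha3 : sumR a3 w = - (INR (pw d) ^ 2 * del n)).
  { unfold a3, w. pose proof (block_split (fun p => tt n p * ts n (S k) p) d P) as HB. cbv beta in HB. rewrite HB.
    rewrite <- sumR_plus. rewrite (sumR_ext _ (fun _ => - (INR (pw d) * del n))). rewrite sumR_const. ring.
    intros r Hr. unfold ts. rewrite Hq, !div_block, Nat.even_odd, Nat.even_even by auto. unfold tt.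
    repeat rewrite ?plus_INR, ?mult_INR. simpl INR. ring. }
  assert (Hb3 : sumR b3 L <= - (3/4) * INR (pw k) ^ 2).
  { unfold b3, L. pose proof (block_split (fun m => INR m * msg (S k) m * g m) k M) as HB. cbv beta in HB. rewrite HB.
    rewrite (sumR_ext _ (fun r => INR (2 * M * pw k) * g (2 * M * pw k + r)%nat + INR r * g (2 * M * pw k + r)%nat))
      by (intros; rewrite msg_first, plus_INR by auto; ring).
    rewrite (sumR_ext (fun r => INR ((2 * M + 1) * pw k + r) * msg (S k) ((2 * M + 1) * pw k + r) * g ((2 * M + 1) * pw k + r)%nat)
       (fun r => -1 * (INR ((2 * M + 1) * pw k) * g ((2 * M + 1) * pw k + r)%nat + INR r * g ((2 * M + 1) * pw k + r)%nat)))
      by (intros; rewrite msg_second, plus_INR by auto; ring).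
    rewrite sumR_scal, !sumR_plus, !sumR_scal. unfold g, Pr. rewrite !Qg_mass.
    pose proof (Qg_moment (sig n y (P * w)) k (sig_bound n y (P * w)) (2 * M)) as H1.
    pose proof (Qg_moment (sig n y (P * w)) k (sig_bound n y (P * w)) (2 * M + 1)) as H2.
    apply Rabs_le2 in H1. apply Rabs_le2 in H2.
    repeat rewrite ?plus_INR, ?mult_INR. simpl INR. nra. }
  rewrite Hb1, Ha2, Ha3. destruct (excluded_middle_informative (nonempty n y (S k) P M)) as [Hx|_]; [tauto|].
  assert (0 <= INR (pw d) ^ 2 * del n) by (apply Rmult_le_pos; [apply pow2_ge_0|lra]).
  nra.
Qed.

Definition Jn n (y : nat -> R) j P i : R :=
  if Rle_dec (INR (P * pw (n + 1 - j)) * del n) (y i) then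
    if Rlt_dec (y i) (INR (P * pw (n + 1 - j) + pw (n + 1 - j)) * del n) then 1 else 0 else 0.

Lemma Jn_nonneg n y j P i : 0 <= Jn n y j P i.
Proof. unfold Jn. destruct (Rle_dec _ _); [destruct (Rlt_dec _ _)|]; lra. Qed.

Lemma Jn_sum n y j i A : sumR (fun P => Jn n y j P i) A <= 1.
Proof.
  set (h := INR (pw (n + 1 - j)) * del n). set (z := y i).
  assert (Hh : 0 < h) by (unfold h; apply Rmult_lt_0_compat; [apply (lt_INR 0), pw_pos|apply del_pos]).
  assert (HJ : forall P, Jn n y j P i = if Rle_dec (INR P * h) z then if Rlt_dec z (INR P * h + h) then 1 else 0 else 0).
  { intros P. unfold Jn, h, z. rewrite plus_INR, mult_INR.
    replace ((INR P * INR (pw (n + 1 - j)) + INR (pw (n + 1 - j))) * del n) with (INR P * (INR (pw (n + 1 - j)) * del n) + INR (pw (n + 1 - j)) * del n) by ring.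
    rewrite Rmult_assoc. auto. }
  assert (forall A, sumR (fun P => Jn n y j P i) A <= 1 /\ (sumR (fun P => Jn n y j P i) A = 0 \/ z < INR A * h)).
  { clear A. intros A. induction A as [|A [IH1 IH2]]. simpl; lra. cbn [sumR]. rewrite HJ, S_INR.
    destruct (Rle_dec (INR A * h) z); [destruct (Rlt_dec z (INR A * h + h))|].
    - destruct IH2 as [IH2|IH2]; [|lra]. rewrite IH2. lra.
    - split; [lra|]. destruct IH2; [left; lra|right; lra].
    - split; [lra|]. destruct IH2; [left; lra|right; lra]. }
  apply (H A). Qed.

Definition ind_ne n y j P M : R := if excluded_middle_informative (nonempty n y j P M) then 1 else 0.

Lemma ind_ne_le n y j P M : ind_ne n y j P M <= sumR (fun r => Jn n y j P (M * pw j + r)%nat) (pw j).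
Proof. unfold ind_ne. destruct (excluded_middle_informative _) as [[i [Hi Hy]]|].
  - replace 1 with (Jn n y j P (M * pw j + (i - M * pw j))%nat).
    apply (sumR_ge_term (fun r => Jn n y j P (M * pw j + r)%nat)). lia. intros; apply Jn_nonneg.
    unfold Jn. replace (M * pw j + (i - M * pw j))%nat with i by lia.
    destruct (Rle_dec _ _); [destruct (Rlt_dec _ _)|]; lra.
  - apply sumR_nonneg; intros; apply Jn_nonneg. Qed.

Lemma count_ne n y j A B : sumR (fun P => sumR (fun M => ind_ne n y j P M) B) A <= INR (B * pw j).
Proof.
  apply Rle_trans with (sumR (fun P => sumR (fun M => sumR (fun r => Jn n y j P (M * pw j + r)%nat) (pw j)) B) A).
  { apply sumR_le; intros; apply sumR_le; intros; apply ind_ne_le. }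
  rewrite sumR_swap. rewrite mult_INR, <- sumR_const.
  apply sumR_le; intros M _. rewrite sumR_swap. rewrite <- (Rmult_1_r (INR (pw j))), <- sumR_const.
  apply sumR_le; intros r _. apply Jn_sum. Qed.

Lemma level n y k : (S k <= n)%nat ->
  sumR (fun p => sumR (fun m => Ef y (tt n p) m * fl n y (S k) p m * Pr n y k p m) (pw n)) (pw (n + 2))
  <= - (3/4) * del n * INR (pw (n - 1)) ^ 2 * INR (pw n).
Proof. intros Hk. destruct (Nat.le_exists_sub (S k) n Hk) as [d [Hd _]]. rewrite Nat.add_comm in Hd. subst n.
  replace (S k + d + 2)%nat with (S (S k) + S d)%nat by lia. rewrite (pw_add (S (S k)) (S d)), sumR_block.
  rewrite (sumR_ext _ (fun P => sumR (fun M => sumR (fun p' => sumR (fun m' =>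
     Ef y (tt (S k + d) (P * pw (S d) + p')) (M * pw (S k) + m') *
     fl (S k + d) y (S k) (P * pw (S d) + p') (M * pw (S k) + m') *
     Pr (S k + d) y k (P * pw (S d) + p') (M * pw (S k) + m')) (pw (S k))) (pw (S d))) (pw d))).
  2:{ intros P _. etransitivity; [|apply sumR_swap]. apply sumR_ext. intros p' _.
      replace (pw (S k + d)) with (pw d * pw (S k))%nat by (rewrite <- pw_add; f_equal; lia). apply sumR_block. }
  set (c := (3/4) * del (S k + d) * INR (pw d) ^ 2 * INR (pw k) ^ 2).
  apply Rle_trans with (sumR (fun P => sumR (fun M => - c * (1 - ind_ne (S k + d) y (S k) P M)) (pw d)) (pw (S (S k)))).
  { apply sumR_le; intros; apply sumR_le; intros. unfold c, ind_ne. eapply Rle_trans; [apply box|]. right; ring. }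
  rewrite (sumR_ext _ (fun P => sumR (fun M => - c + c * ind_ne (S k + d) y (S k) P M) (pw d))).
  2:{ intros; apply sumR_ext; intros; ring. }
  rewrite (sumR_ext _ (fun P => INR (pw d) * (- c) + c * sumR (fun M => ind_ne (S k + d) y (S k) P M) (pw d))).
  2:{ intros. rewrite sumR_plus, sumR_const, sumR_scal. auto. }
  rewrite sumR_plus, sumR_const, sumR_scal.
  pose proof (count_ne (S k + d) y (S k) (pw (S (S k))) (pw d)) as Hc.
  assert (Hc0 : 0 <= c). { unfold c. pose proof (del_pos (S k + d)).
    apply Rmult_le_pos; [apply Rmult_le_pos; [apply Rmult_le_pos|]|]; try lra; apply pow2_ge_0. }
  assert (E1 : INR (pw d * pw (S k)) = INR (pw (S k + d))) by (f_equal; rewrite <- pw_add; f_equal; lia).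
  assert (E2 : INR (pw (S (S k))) * INR (pw d) = 2 * INR (pw (S k + d))).
  { rewrite <- mult_INR. replace (pw (S (S k)) * pw d)%nat with (2 * pw (S k + d))%nat. rewrite mult_INR; auto.
    rewrite (pw_S (S k)), pw_add. lia. }
  assert (E3 : INR (pw (S k + d - 1)) = INR (pw d) * INR (pw k)).
  { rewrite <- mult_INR, <- pw_add. f_equal. f_equal. lia. }
  rewrite E1 in Hc. rewrite E3.
  replace (- (3 / 4) * del (S k + d) * (INR (pw d) * INR (pw k)) ^ 2 * INR (pw (S k + d))) with
    (- c * INR (pw (S k + d))) by (unfold c; ring).
  replace (INR (pw (S (S k))) * (INR (pw d) * - c)) with (- c * (INR (pw (S (S k))) * INR (pw d))) by ring.
  rewrite E2. apply Rmult_le_compat_l with (r := c) in Hc; auto. lra. Qed.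

Lemma core n y : (1 <= n)%nat -> exists p m, (p < pw (n + 2))%nat /\ (m < pw n)%nat /\
  INR n / 1024 <= Rabs (Ef y (tt n p) m).
Proof. intros Hn. apply NNPP. intros Hno.
  assert (Hall : forall p m, (p < pw (n + 2))%nat -> (m < pw n)%nat -> Rabs (Ef y (tt n p) m) < INR n / 1024).
  { intros p m Hp Hm. apply Rnot_le_lt. intros H. apply Hno. exists p, m. auto. }
  set (MS := sumR (fun p => sumR (fun m => Ef y (tt n p) m * (Pr n y n p m - 1)) (pw n)) (pw (n + 2))).
  assert (HMS : MS = sumR (fun k => / 4 * sumR (fun p => sumR (fun m => Ef y (tt n p) m * fl n y (S k) p m * Pr n y k p m) (pw n)) (pw (n + 2))) n).
  { unfold MS. rewrite (sumR_ext _ (fun p => sumR (fun k => sumR (fun m => / 4 * (Ef y (tt n p) m * fl n y (S k) p m * Pr n y k p m)) (pw n)) n)).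
    rewrite sumR_swap. apply sumR_ext; intros k _. rewrite <- sumR_scal. apply sumR_ext; intros. rewrite <- sumR_scal. auto.
    intros p _. rewrite <- sumR_swap. apply sumR_ext; intros m _. rewrite Pr_minus1, <- sumR_scal. apply sumR_ext; intros. ring. }
  set (N1 := INR (pw (n - 1))).
  assert (EN : INR (pw n) = 2 * N1). { unfold N1. clear - Hn. destruct n as [|n0]; [lia|].
    replace (S n0 - 1)%nat with n0 by lia. rewrite pw_S, mult_INR. simpl; ring. }
  assert (EN2 : INR (pw (n + 2)) = 8 * N1). { replace (n + 2)%nat with (S (S n)) by lia. rewrite !pw_S, !mult_INR, EN. simpl; ring. }
  assert (HN1 : 0 < N1) by (apply (lt_INR 0), pw_pos).
  assert (Hnr : 1 <= INR n) by (apply (le_INR 1); auto).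
  assert (Hup : MS <= - (3/64) * INR n * N1 ^ 2).
  { rewrite HMS. apply Rle_trans with (sumR (fun k => / 4 * (- (3/4) * del n * N1 ^ 2 * INR (pw n))) n).
    apply sumR_le; intros k Hk. apply Rmult_le_compat_l; [lra|]. apply level; lia.
    rewrite sumR_const. unfold del. rewrite EN, EN2. field_simplify; [|lra]. lra. }
  assert (Hlow : Rabs MS <= INR n / 1024 * (2 * INR (pw n) * INR (pw (n + 2)))).
  { unfold MS. eapply Rle_trans; [apply sumR_abs|].
    apply Rle_trans with (sumR (fun p => INR n / 1024 * (2 * INR (pw n))) (pw (n + 2))).
    2:{ rewrite sumR_const. right; ring. }
    apply sumR_le; intros p Hp. eapply Rle_trans; [apply sumR_abs|].
    apply Rle_trans with (sumR (fun m => INR n / 1024 * (Pr n y n p m + 1)) (pw n)).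
    - apply sumR_le; intros m Hm. rewrite Rabs_mult. pose proof (Hall p m Hp Hm).
      pose proof (Qg_nonneg (sig n y p) n m (sig_bound n y p)). fold (Pr n y n p m) in H0.
      assert (Rabs (Pr n y n p m - 1) <= Pr n y n p m + 1) by (apply Rabs_le; lra).
      apply Rmult_le_compat; try apply Rabs_pos; lra.
    - rewrite sumR_scal, sumR_plus, sumR_const.
      pose proof (Qg_mass (sig n y p) n 0) as HM. change (sumR (Pr n y n p) (pw n) = INR (pw n)) in HM.
      rewrite HM. right; ring. }
  rewrite EN, EN2 in Hlow. apply Rabs_le2 in Hlow.
  assert (0 < INR n * N1 ^ 2) by (apply Rmult_lt_0_compat; [lra| apply pow_lt; lra]).
  nra. Qed.


Lemma disc_elem_bound mu x N b : (1 <= N)%nat -> Rabs (pm mu (fun y => 0 <= y < b) - empirical x N b) <= 1.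
Proof. intros HN. pose proof (G_range mu b) as HG. unfold G in HG. unfold empirical.
  pose proof (count_below_range x N b). assert (1 <= INR N) by (apply (le_INR 1); auto).
  assert (0 <= count_below x N b / INR N <= 1). { split. apply Rmult_le_pos; [lra|]. apply Rlt_le, Rinv_0_lt_compat; lra.
    apply Rmult_le_reg_r with (INR N); [lra|]. unfold Rdiv; rewrite Rmult_assoc, Rinv_l; lra. }
  apply Rabs_le; lra. Qed.

Lemma disc_bounded mu x N : (1 <= N)%nat -> exists M, forall r, (fun r => exists b, 0 <= b <= 1 /\
          r = Rabs (pm mu (fun y => 0 <= y < b) - empirical x N b)) r -> r <= M.
Proof. intros HN. exists 1. intros r [b [_ ->]]. apply disc_elem_bound; auto. Qed.

Lemma disc_ge mu x N b r : (1 <= N)%nat -> 0 <= b <= 1 ->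
  r <= Rabs (G mu b - count_below x N b / INR N) -> r <= star_disc mu x N.
Proof. intros HN Hb H. eapply Rle_trans; [apply H|]. unfold star_disc. apply sup_R_ge.
  exists b; split; auto. apply disc_bounded; auto. Qed.

Lemma disc_le1 mu x N : (1 <= N)%nat -> star_disc mu x N <= 1.
Proof. intros HN. unfold star_disc. apply sup_R_le. lra. intros r [b [_ ->]]. apply disc_elem_bound; auto. Qed.

Lemma min_index (x : nat -> R) N : (1 <= N)%nat -> exists i0, (1 <= i0 <= N)%nat /\ forall i, (1 <= i <= N)%nat -> x i0 <= x i.
Proof. induction N; intros HN; [lia|]. destruct (Nat.eq_dec N 0) as [->|HN0].
  exists 1%nat. split; [lia|]. intros i Hi. assert (i = 1%nat) by lia. subst; lra.
  destruct IHN as [i0 [Hi0 Hm]]; [lia|]. destruct (Rle_dec (x i0) (x (S N))).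
  - exists i0. split; [lia|]. intros i Hi. destruct (Nat.eq_dec i (S N)). subst; auto. apply Hm; lia.
  - exists (S N). split; [lia|]. intros i Hi. destruct (Nat.eq_dec i (S N)). subst; lra. specialize (Hm i ltac:(lia)); lra. Qed.

Lemma count_zero (x : nat -> R) N b : (forall i, (1 <= i <= N)%nat -> ~ x i < b) -> count_below x N b = 0.
Proof. induction N; intros H; simpl; auto. rewrite IHN by (intros; apply H; lia).
  destruct (Rlt_dec _ _) as [h|]; [exfalso; apply (H (S N)); auto; lia|lra]. Qed.

Lemma count_pos (x : nat -> R) N b i0 : (1 <= i0 <= N)%nat -> x i0 < b -> 1 <= count_below x N b.
Proof. induction N; intros Hi Hx; [lia|]. cbn [count_below]. destruct (Nat.eq_dec i0 (S N)).
  - subst. destruct (Rlt_dec _ _); [|tauto]. pose proof (count_below_range x N b). lra.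
  - assert (1 <= count_below x N b) by (apply IHN; auto; lia). destruct (Rlt_dec _ _); lra. Qed.

Lemma count_eq (y : nat -> R) m a b : (forall i, (1 <= i <= m)%nat -> (y i < a <-> y i < b)) -> count_below y m a = count_below y m b.
Proof. induction m; intros H; simpl; auto. rewrite IHm by (intros; apply H; lia).
  specialize (H (S m) ltac:(lia)). destruct (Rlt_dec _ a), (Rlt_dec _ b); tauto || lra. Qed.

Lemma inv_mono k k' : (k <= k')%nat -> / (INR k' + 1) <= / (INR k + 1).
Proof. intros H. apply Rinv_le_contravar. pose proof (pos_INR k); lra. apply le_INR in H; lra. Qed.

Lemma part3a mu N x : no_atoms mu -> (1 <= N)%nat -> (forall i, (1 <= i <= N)%nat -> 0 <= x i <= 1) ->
  star_disc mu x N >= 1 / (2 * INR N).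
Proof. intros Hna HN Hx. apply Rle_ge. assert (HNr : 1 <= INR N) by (apply (le_INR 1); auto).
  destruct (min_index x N HN) as [i0 [Hi0 Hm]]. set (z := x i0). pose proof (Hx i0 Hi0) as Hz. fold z in Hz.
  assert (Hc0 : count_below x N z = 0) by (apply count_zero; intros i Hi; specialize (Hm i Hi); unfold z; lra).
  destruct (Rle_dec (1 / (2 * INR N)) (G mu z)) as [Hg|Hg].
  { apply (disc_ge mu x N z); auto. rewrite Hc0. unfold Rdiv at 2. rewrite Rmult_0_l, Rminus_0_r.
    pose proof (G_range mu z). rewrite Rabs_right; lra. }
  assert (Hz1 : z < 1). { destruct (Req_dec z 1) as [E|E]; [|lra]. exfalso. rewrite E, G_1, (Hna 1) in Hg by lra.
    apply Hg. unfold Rdiv. rewrite Rmult_1_l. apply Rle_trans with (/ 2); [apply Rinv_le_contravar; lra | lra]. }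
  pose proof (G_right mu z ltac:(lra)) as Hr. rewrite (Hna z Hz), Rplus_0_r in Hr.
  destruct (Hr (1 / (2 * INR N) - G mu z)) as [K1 HK1]; [lra|].
  destruct (small_inv (1 - z)) as [K2 HK2]; [lra|].
  set (k := max K1 K2). specialize (HK1 k ltac:(unfold k; lia)). unfold Rdist in HK1. apply Rabs_def2 in HK1.
  pose proof (inv_mono K2 k ltac:(unfold k; lia)). pose proof (inv_pos k).
  set (b := z + / (INR k + 1)).
  apply (disc_ge mu x N b); auto. unfold b; lra.
  assert (1 <= count_below x N b) by (apply (count_pos x N b i0); auto; unfold b, z; lra).
  assert (/ INR N <= count_below x N b / INR N). { unfold Rdiv. rewrite <- (Rmult_1_l (/ INR N)) at 1.
    apply Rmult_le_compat_r; auto. apply Rlt_le, Rinv_0_lt_compat; lra. }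
  assert (1 / (2 * INR N) = / INR N / 2) by (field; lra).
  assert (0 < / INR N) by (apply Rinv_0_lt_compat; lra).
  fold b in HK1. rewrite Rabs_minus_sym, Rabs_right; lra. Qed.

Lemma count_eq2 (x y : nat -> R) m a b : (forall i, (1 <= i <= m)%nat -> (x i < a <-> y i < b)) -> count_below x m a = count_below y m b.
Proof. induction m; intros H; simpl; auto. rewrite IHm by (intros; apply H; lia).
  specialize (H (S m) ltac:(lia)). destruct (Rlt_dec _ a), (Rlt_dec _ b); tauto || lra. Qed.

Lemma gap (y : nat -> R) m t : exists eta, 0 < eta /\ forall i, (1 <= i <= m)%nat -> ~ (t - eta <= y i < t).
Proof. induction m. exists 1. split; [lra|]. intros; lia.
  destruct IHm as [e1 [He1 H1]].
  destruct (Rlt_dec (y (S m)) t) as [Hy|Hy].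
  - exists (Rmin e1 ((t - y (S m)) / 2)). split. apply Rmin_glb_lt; lra.
    intros i Hi. pose proof (Rmin_l e1 ((t - y (S m)) / 2)). pose proof (Rmin_r e1 ((t - y (S m)) / 2)).
    destruct (Nat.eq_dec i (S m)). subst. lra. specialize (H1 i ltac:(lia)). lra.
  - exists e1. split; auto. intros i Hi. destruct (Nat.eq_dec i (S m)). subst. lra. apply H1; lia. Qed.

Lemma ln2_lt1 : ln 2 < 1.
Proof. rewrite <- (ln_exp 1). apply ln_increasing. lra. pose proof (exp_ineq1 1 ltac:(lra)). lra. Qed.

Lemma part3b mu : no_atoms mu -> forall x : nat -> R, (forall k, (1 <= k)%nat -> 0 <= x k <= 1) ->
  forall M0 : nat, exists N : nat, (M0 <= N)%nat /\ (1 <= N)%nat /\ star_disc mu x N >= / 4096 * ln (INR N) / INR N.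
Proof. intros Hna x Hx M0. apply NNPP; intros Hno.
  assert (Hlt : forall N, (M0 <= N)%nat -> (1 <= N)%nat -> star_disc mu x N < / 4096 * ln (INR N) / INR N).
  { intros N H1 H2. apply Rnot_le_lt. intros H. apply Hno. exists N. split; auto. split; auto. lra. }
  set (n := (2048 * M0 + 1)%nat).
  assert (Hnr : INR n = 2048 * INR M0 + 1) by (unfold n; rewrite plus_INR, mult_INR; simpl; ring).
  set (y := fun i => G mu (x i)).
  destruct (core n y ltac:(unfold n; lia)) as [p [m [Hp [Hm HE]]]].
  set (t := tt n p) in *.
  assert (Ht : 0 <= t < 1). { unfold t, tt, del. split. apply Rmult_le_pos; [apply pos_INR|]. apply Rlt_le, Rinv_0_lt_compat, (lt_INR 0), pw_pos.
    apply Rmult_lt_reg_r with (INR (pw (n + 2))). apply (lt_INR 0), pw_pos. rewrite Rmult_assoc, Rinv_l, Rmult_1_r, Rmult_1_l.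
    apply lt_INR; auto. apply not_0_INR. pose proof (pw_pos (n + 2)); lia. }
  assert (HM0 : 0 <= INR M0) by apply pos_INR.
  assert (Hm1 : (1 <= m)%nat). { destruct m; [|lia]. exfalso. unfold Ef in HE. simpl in HE.
    replace (0 - 0 * t) with 0 in HE by ring. rewrite Rabs_R0 in HE. lra. }
  assert (HmR : 1 <= INR m) by (apply (le_INR 1); auto).
  assert (Ht0 : 0 < t). { destruct (Req_dec t 0) as [E|E]; [|lra]. exfalso. unfold Ef in HE. rewrite E in HE.
    rewrite count_zero in HE. replace (0 - INR m * 0) with 0 in HE by ring. rewrite Rabs_R0 in HE. lra.
    intros i Hi. unfold y. pose proof (G_range mu (x i)). lra. }
  destruct (gap y m t) as [eta [Heta Hgap]].
  set (e := Rmin eta (Rmin t (/ (2048 * INR m))) / 2).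
  assert (He : 0 < e /\ e < eta /\ e < t /\ INR m * e <= / 4096).
  { unfold e. pose proof (Rmin_l eta (Rmin t (/ (2048 * INR m)))). pose proof (Rmin_r eta (Rmin t (/ (2048 * INR m)))).
    pose proof (Rmin_l t (/ (2048 * INR m))). pose proof (Rmin_r t (/ (2048 * INR m))).
    assert (0 < / (2048 * INR m)) by (apply Rinv_0_lt_compat; lra).
    assert (0 < Rmin eta (Rmin t (/ (2048 * INR m)))) by (repeat apply Rmin_glb_lt; lra).
    split; [lra|]. split; [lra|]. split; [lra|].
    assert (INR m * / (2048 * INR m) = / 2048) by (field; lra). nra. }
  destruct He as [He1 [He2 [He3 He4]]].
  set (t' := t - e).
  assert (Hc1 : count_below y m t' = count_below y m t).
  { apply count_eq. intros i Hi. specialize (Hgap i Hi). unfold t'. split; intros; lra. }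
  destruct (ivt_G mu Hna t' ltac:(unfold t'; lra)) as [b [Hb HGb]].
  assert (Hc2 : count_below x m b = count_below y m t').
  { apply count_eq2. intros i Hi. unfold y. specialize (Hgap i Hi). unfold y in Hgap. split; intros H.
    - pose proof (G_mono mu (x i) b ltac:(lra)). destruct (Req_dec (G mu (x i)) t'); [|lra]. exfalso. unfold t' in *. lra.
    - destruct (Rlt_le_dec (x i) b); auto. pose proof (G_mono mu b (x i) r). lra. }
  assert (Hd : (INR n / 1024 - / 4096) / INR m <= star_disc mu x m).
  { apply (disc_ge mu x m b); auto. rewrite Hc2, Hc1, HGb. unfold Ef in HE.
    replace (t' - count_below y m t / INR m) with (- ((count_below y m t - INR m * t) + INR m * e) / INR m) by (unfold t'; field; lra).
    unfold Rdiv. rewrite Rabs_mult, Rabs_Ropp, Rabs_inv, (Rabs_right (INR m)) by lra.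
    apply Rmult_le_compat_r. apply Rlt_le, Rinv_0_lt_compat; lra.
    pose proof (Rabs_triang_inv (count_below y m t - INR m * t) (- (INR m * e))).
    replace (count_below y m t - INR m * t - - (INR m * e)) with (count_below y m t - INR m * t + INR m * e) in H by ring.
    rewrite Rabs_Ropp, (Rabs_right (INR m * e)) in H by nra. lra. }
  destruct (le_lt_dec M0 m) as [HmM|HmM].
  - specialize (Hlt m HmM Hm1).
    assert (Hln : ln (INR m) < INR n). { apply Rlt_trans with (INR n * ln 2).
      rewrite <- ln_pow by lra. apply ln_increasing. lra. rewrite <- (pow_INR 2). apply lt_INR; auto.
      pose proof ln2_lt1. pose proof ln2_pos. assert (1 <= INR n) by lra. nra. }
    assert ((INR n / 1024 - / 4096) / INR m < / 4096 * ln (INR m) / INR m) by lra.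
    unfold Rdiv in H. apply Rmult_lt_reg_r in H; [|apply Rinv_0_lt_compat; lra]. lra.
  - pose proof (disc_le1 mu x m Hm1).
    assert ((INR n / 1024 - / 4096) / INR m <= 1) by lra.
    apply Rmult_le_compat_r with (r := INR m) in H0; [|lra]. unfold Rdiv in H0. rewrite Rmult_assoc, Rinv_l, Rmult_1_r, Rmult_1_l in H0 by lra.
    apply lt_INR in HmM. lra. Qed.

Theorem theorem3p2 (mu : prob_measure) :
  (* (1) *)
  (exists c : R, forall N : nat, (1 <= N)%nat ->
     exists x : nat -> R,
       (forall i, (1 <= i <= N)%nat -> 0 <= x i <= 1) /\
       star_disc mu x N <= c / INR N)
  /\
  (* (2) *)
  (exists (x : nat -> R) (c : R),
     (forall k, (1 <= k)%nat -> 0 <= x k <= 1) /\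
     forall N : nat, (2 <= N)%nat ->
       star_disc mu x N <= c * ln (INR N) / INR N)
  /\
  (* (3) *)
  (no_atoms mu ->
     (forall (N : nat) (x : nat -> R), (1 <= N)%nat ->
        (forall i, (1 <= i <= N)%nat -> 0 <= x i <= 1) ->
        star_disc mu x N >= 1 / (2 * INR N))
     /\
     (exists c : R, c > 0 /\
        forall x : nat -> R,
          (forall k, (1 <= k)%nat -> 0 <= x k <= 1) ->
          forall M : nat, exists N : nat, (M <= N)%nat /\ (1 <= N)%nat /\
            star_disc mu x N >= c * ln (INR N) / INR N)).
Proof.
  split; [|split].
  - exists 1. intros N HN. assert (HNr : 1 <= INR N) by (apply (le_INR 1); auto).
    set (y := fun i => (2 * INR i - 1) / (2 * INR N)).
    assert (Hy : forall i, (1 <= i <= N)%nat -> 0 <= y i).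
    { intros i Hi. unfold y. apply Rmult_le_pos. assert (1 <= INR i) by (apply (le_INR 1); lia). lra.
      apply Rlt_le, Rinv_0_lt_compat; lra. }
    exists (fun i => Qf mu (y i)). split.
    + intros i Hi. apply Qf_range; auto.
    + apply disc_transfer; auto. apply Rlt_le, Rmult_lt_0_compat; [lra|apply Rinv_0_lt_compat; lra].
      intros u Hu. apply part1_count; auto.
  - exists (fun i => Qf mu (phi (pred i))), Cvdc. split.
    + intros k _. apply Qf_range. apply phi_range.
    + intros N HN. assert (HNr : 2 <= INR N) by (apply (le_INR 2); auto).
      apply (disc_transfer mu (fun i => phi (pred i))). intros; apply phi_range.
      unfold Cvdc. pose proof ln2_pos. pose proof ln32_pos.
      assert (0 <= ln (INR N)) by (apply ln_INR_nonneg; lia).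
      apply Rmult_le_pos; [|apply Rlt_le, Rinv_0_lt_compat; lra].
      apply Rmult_le_pos; auto. apply Rplus_le_le_0_compat; apply Rlt_le, Rinv_0_lt_compat; lra.
      intros u Hu. apply part2_count; auto.
  - intros Hna. split.
    + intros N x HN Hx. apply part3a; auto.
    + exists (/ 4096). split. lra. apply part3b; auto.
Qed.
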